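(* For all integers $0\le a\le b$, $\mathrm{Incr}(\zeta(a,b))=\zeta(a,b+1)$; that is, applying $\mathrm{Incr}$ to the $\zeta$-decomposition of $B(a,b)$ yields a list of bucket structures whose buckets are exactly those of the $\zeta$-decomposition of $B(a,b+1)$, each carrying uniformly distributed random samples of its bucket, with all samples mutually independent.
   Context: Let $p_0,p_1,\dots$ be a stream. For integers $x<y$, the bucket $B(x,y)=\{p_i: x\le i\le y-1\}$. A bucket structure $BS(x,y)$ stores $p_x$, $x$, $y$, the timestamp of $p_x$, and two random samples $R_{x,y},Q_{x,y}$, each uniformly distributed on $B(x,y)$, together with the indices of the sampled elements. Logarithms are base 2. The $\zeta$-decomposition is the ordered list of bucket structures (with all samples mutually independent) defined by $\zeta(b,b)=\langle BS(b,b+1)\rangle$ and, for $a<b$, $\zeta(a,b)=\langle BS(a,c),\zeta(c,b)\rangle$ where $c=a+2^{\lfloor\log(b+1-a)\rfloor-1}$. Given the new element $p_{b+1}$, the operator $\mathrm{Incr}$ is defined by $\mathrm{Incr}(\zeta(b,b))=\langle BS(b,b+1),BS(b+1,b+2)\rangle$ (the new structure with fresh independent samples), and for $a<b$, $\mathrm{Incr}(\zeta(a,b))=\langle BS(a,v),\mathrm{Incr}(\zeta(v,b))\rangle$, where: if $\lfloor\log(b+2-a)\rfloor=\lfloor\log(b+1-a)\rfloor$ then $v=c$ and $BS(a,c)$ (the first structure of $\zeta(a,b)$) is kept unchanged; otherwise, letting $BS(a,c),BS(c,d)$ be the first two structures of $\zeta(a,b)$, $v=d$ and $BS(a,d)$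 is formed by merging them: $R_{a,d}$ equals $R_{a,c}$ with probability $1/2$ and $R_{c,d}$ otherwise (using a fresh independent coin), and likewise for $Q_{a,d}$ with an independent coin. *)

(* Defs.v *)
From mathcomp Require Import all_boot all_order all_algebra.
Set Implicit Arguments. Unset Strict Implicit. Unset Printing Implicit Defensive.
Import GRing.Theory Num.Theory.
Local Open Scope ring_scope.

Definition dist (T : Type) := seq (rat * T).

Definition dret (T : Type) (x : T) : dist T := [:: (1, x)].

Definition dbind (T U : Type) (d : dist T) (f : T -> dist U) : dist U :=
  flatten [seq [seq (p.1 * q.1, q.2) | q <- f p.2] | p <- d].

Definition prob (T : eqType) (d : dist T) (v : T) : rat :=
  \sum_(p <- d | p.2 == v) p.1.

(* Uniform distribution on the index set {x, ..., y-1} (bucket B(x,y)). *)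
Definition unif (x y : nat) : dist nat :=
  [seq (((y - x)%N%:R)^-1, i) | i <- iota x (y - x)].

Definition coin : dist bool := [:: (1/2, true); (1/2, false)].

Definition flog (n : nat) : nat := trunc_log 2 n.

(* A bucket structure BS(x,y) is represented by (x, y, iR, iQ) where iR, iQ
   are the indices of the sampled elements R_{x,y}, Q_{x,y}.  The stored
   element p_x, its timestamp and the sampled elements p_iR, p_iQ are
   functions of these indices, so they carry no extra randomness. *)
Definition BS := (nat * nat * nat * nat)%type.
Definition bs_x (s : BS) : nat := s.1.1.1.
Definition bs_y (s : BS) : nat := s.1.1.2.
Definition bs_R (s : BS) : nat := s.1.2.
Definition bs_Q (s : BS) : nat := s.2.

Definition zeta_split (a b : nat) : nat := (a + 2 ^ (flog (b.+1 - a)).-1)%N.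

Fixpoint zeta_bounds_fuel (n a b : nat) : seq (nat * nat) :=
  match n with
  | 0 => [:: (b, b.+1)]
  | n'.+1 => if (a < b)%N then (a, zeta_split a b) :: zeta_bounds_fuel n' (zeta_split a b) b
             else [:: (b, b.+1)]
  end.

Definition zeta_bounds (a b : nat) : seq (nat * nat) := zeta_bounds_fuel (b - a) a b.

Definition rand_bs (x y : nat) : dist BS :=
  dbind (unif x y) (fun r => dbind (unif x y) (fun q => dret (x, y, r, q))).

Fixpoint rand_bs_list (l : seq (nat * nat)) : dist (seq BS) :=
  match l with
  | [::] => dret [::]
  | xy :: l' => dbind (rand_bs xy.1 xy.2)
                  (fun s => dbind (rand_bs_list l') (fun t => dret (s :: t)))
  end.

Definition zeta (a b : nat) : dist (seq BS) := rand_bs_list (zeta_bounds a b).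

(* The operator Incr, applied to a list of bucket structures (the
   zeta-decomposition of B(a,b), a = x-coordinate of its first structure),
   given the new element p_{b+1}. *)
Fixpoint incr (b : nat) (l : seq BS) : dist (seq BS) :=
  match l with
  | [::] => dret [::]
  | [:: s] => dbind (rand_bs b.+1 b.+2) (fun s' => dret [:: s; s'])
  | s1 :: ((s2 :: rest2) as rest) =>
      let a := bs_x s1 in
      if flog (b.+2 - a) == flog (b.+1 - a) then
        dbind (incr b rest) (fun t => dret (s1 :: t))
      else
        dbind coin (fun cR => dbind coin (fun cQ =>
          let m := (a, bs_y s2,
                    (if cR then bs_R s1 else bs_R s2),
                    (if cQ then bs_Q s1 else bs_Q s2)) in
          dbind (incr b rest2) (fun t => dret (m :: t))))
  end.

(* Main.v *)
Require Import Defs.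
From mathcomp Require Import all_boot all_order all_algebra.
From mathcomp Require Import zify ring lra.
Set Implicit Arguments. Unset Strict Implicit. Unset Printing Implicit Defensive.
Import GRing.Theory Num.Theory.
Local Open Scope ring_scope.

Definition E (T : Type) (d : dist T) (G : T -> rat) : rat := \sum_(p <- d) p.1 * G p.2.

Lemma E_ext T (d : dist T) F G : (forall x, F x = G x) -> E d F = E d G.
Proof. by move=> H; apply: eq_bigr => p _; rewrite H. Qed.

Lemma E_bind T U (d : dist T) (f : T -> dist U) G :
  E (dbind d f) G = E d (fun x => E (f x) G).
Proof.
rewrite /E /dbind big_flatten big_map; apply: eq_bigr => p _.
by rewrite big_map big_distrr; apply: eq_bigr => q _ /=; rewrite mulrA.
Qed.

Lemma E_ret T (x : T) G : E (dret x) G = G x.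
Proof. by rewrite /E /dret big_cons big_nil /= mul1r addr0. Qed.

Lemma E_swap T U (d1 : dist T) (d2 : dist U) F :
  E d1 (fun x => E d2 (fun y => F x y)) = E d2 (fun y => E d1 (fun x => F x y)).
Proof.
rewrite /E; under eq_bigr do rewrite big_distrr.
rewrite exchange_big; apply: eq_bigr => q _; rewrite big_distrr.
by apply: eq_bigr => p _ /=; rewrite mulrCA.
Qed.

Lemma E_add T (d : dist T) F G : E d (fun x => F x + G x) = E d F + E d G.
Proof. by rewrite /E -big_split; apply: eq_bigr => p _; rewrite mulrDr. Qed.

Lemma E_scale T (d : dist T) k F : E d (fun x => k * F x) = k * E d F.
Proof. by rewrite /E big_distrr; apply: eq_bigr => p _; rewrite mulrCA. Qed.

Lemma E_coin F : E coin F = 1/2 * F true + 1/2 * F false.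
Proof. by rewrite /E /coin !big_cons big_nil /= addr0. Qed.

Lemma E_unif x y F : E (unif x y) F = (y - x)%N%:R^-1 * \sum_(x <= i < y) F i.
Proof. by rewrite /E /unif big_map big_distrr. Qed.

Lemma E_unif_const x y k : (x < y)%N -> E (unif x y) (fun _ => k) = k.
Proof.
move=> lt; rewrite E_unif sumr_const_nat -[k *+ _]mulr_natl mulrA mulVf ?mul1r //.
by rewrite pnatr_eq0 -lt0n subn_gt0.
Qed.

Lemma E_unif_split a m F : (0 < m)%N ->
  E (unif a (a + m + m)) F = 1/2 * E (unif a (a + m)) F + 1/2 * E (unif (a + m) (a + m + m)) F.
Proof.
move=> m0; rewrite !E_unif.
have -> : (a + m + m - a = m + m)%N by lia.
have -> : (a + m + m - (a + m) = m)%N by lia.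
have -> : (a + m - a = m)%N by lia.
rewrite (big_cat_nat _ (n := (a + m)%N)) ?leq_addr //=.
move: (\sum_(a <= i < a + m) F i) (\sum_(a + m <= i < a + m + m) F i) => S1 S2.
have hm : (m%:R : rat) != 0 by rewrite pnatr_eq0 -lt0n.
rewrite natrD; field; rewrite hm /=.
by rewrite -natrD pnatr_eq0 addn_eq0 negb_and -lt0n m0.
Qed.

Lemma E_mix a m F : (0 < m)%N ->
  E (unif a (a + m)) (fun r1 => E (unif (a + m) (a + m + m))
     (fun r2 => E coin (fun b => F (if b then r1 else r2)))) = E (unif a (a + m + m)) F.
Proof.
move=> m0; rewrite E_unif_split //.
have lt1 : (a < a + m)%N by lia.
have lt2 : (a + m < a + m + m)%N by lia.
rewrite (@E_ext _ _ _ (fun r1 => 1/2 * F r1 + 1/2 * E (unif (a + m) (a + m + m)) F)); last first.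
  move=> r1; rewrite (@E_ext _ _ _ (fun r2 => 1/2 * F r1 + 1/2 * F r2)); last by move=> r2; rewrite E_coin.
  by rewrite E_add !E_scale E_unif_const.
by rewrite E_add !E_scale E_unif_const.
Qed.

Lemma E_rand_bs x y H :
  E (rand_bs x y) H = E (unif x y) (fun r => E (unif x y) (fun q => H (x, y, r, q))).
Proof.
rewrite /rand_bs E_bind; apply: E_ext => r.
by rewrite E_bind; apply: E_ext => q; rewrite E_ret.
Qed.

Lemma E_rand_ext x y F F' : (forall r q, F (x, y, r, q) = F' (x, y, r, q)) ->
  E (rand_bs x y) F = E (rand_bs x y) F'.
Proof.
by move=> h; rewrite !E_rand_bs; apply: E_ext => r; apply: E_ext => q; apply: h.
Qed.

Lemma E_list_cons xy l H : E (rand_bs_list (xy :: l)) H =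
  E (rand_bs xy.1 xy.2) (fun s => E (rand_bs_list l) (fun t => H (s :: t))).
Proof.
rewrite /= E_bind; apply: E_ext => s.
by rewrite E_bind; apply: E_ext => t; rewrite E_ret.
Qed.

Lemma E_list_nil H : E (rand_bs_list [::]) H = H [::].
Proof. exact: E_ret. Qed.

Lemma E_list_ext xy l F F' : (forall s t, F (s :: t) = F' (s :: t)) ->
  E (rand_bs_list (xy :: l)) F = E (rand_bs_list (xy :: l)) F'.
Proof.
by move=> h; rewrite !E_list_cons; apply: E_ext => s; apply: E_ext => t; apply: h.
Qed.

Lemma E_merge2 a m H : (0 < m)%N ->
  E (rand_bs a (a + m)) (fun s1 => E (rand_bs (a + m) (a + m + m)) (fun s2 =>
    E coin (fun cR => E coin (fun cQ =>
      H (if cR then bs_R s1 else bs_R s2) (if cQ then bs_Q s1 else bs_Q s2)))))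
  = E (unif a (a + m + m)) (fun r => E (unif a (a + m + m)) (fun q => H r q)).
Proof.
move=> m0; rewrite E_rand_bs.
transitivity (E (unif a (a + m)) (fun r1 => E (unif (a + m) (a + m + m)) (fun r2 =>
   E coin (fun cR => E (unif a (a + m)) (fun q1 => E (unif (a + m) (a + m + m)) (fun q2 =>
   E coin (fun cQ => H (if cR then r1 else r2) (if cQ then q1 else q2)))))))).
  apply: E_ext => r1.
  rewrite (@E_ext _ _ _ (fun q1 => E (unif (a + m) (a + m + m)) (fun r2 =>
     E (unif (a + m) (a + m + m)) (fun q2 => E coin (fun cR => E coin (fun cQ =>
      H (if cR then r1 else r2) (if cQ then q1 else q2))))))); last first.
    by move=> q1; rewrite E_rand_bs.
  rewrite E_swap; apply: E_ext => r2.
  rewrite [RHS]E_swap; apply: E_ext => q1.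
  by rewrite [RHS]E_swap.
rewrite (@E_ext _ _ _ (fun r1 => E (unif (a + m) (a + m + m)) (fun r2 =>
   E coin (fun cR => E (unif a (a + m + m)) (fun q => H (if cR then r1 else r2) q))))); last first.
  move=> r1; apply: E_ext => r2; apply: E_ext => cR.
  exact: (@E_mix a m (H (if cR then r1 else r2)) m0).
exact: (@E_mix a m (fun x => E (unif a (a + m + m)) (fun q => H x q)) m0).
Qed.

Lemma split_gt a b : (a < zeta_split a b)%N.
Proof. rewrite /zeta_split; have := expn_gt0 2 (flog (b.+1 - a)).-1; lia. Qed.

Lemma split_le a b : (a < b)%N -> (zeta_split a b <= b)%N.
Proof.
move=> lt; rewrite /zeta_split /flog.
have hP := @trunc_logP 2 (b.+1 - a) isT (ltac:(lia)).
have : (0 < trunc_log 2 (b.+1 - a))%N by rewrite trunc_log_gt0 /=; lia.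
case: (trunc_log 2 (b.+1 - a)) hP => [//|j] /=; rewrite expnS => hP _.
have := expn_gt0 2 j; lia.
Qed.

Lemma fuel_eq n m a b : (b - a <= n)%N -> (b - a <= m)%N ->
  zeta_bounds_fuel n a b = zeta_bounds_fuel m a b.
Proof.
elim: n m a b => [|n IH] m a b hn hm.
  by case: m hm => [//|m] hm /=; case: ifP => // hlt; lia.
case: m hm => [|m] hm /=.
  by case: ifP => // hlt; lia.
case: ifP => // hlt; congr cons; apply: IH; have := split_gt a b; lia.
Qed.

Lemma fuel_ok n a b : (b - a <= n)%N -> zeta_bounds_fuel n a b = zeta_bounds a b.
Proof. by move=> h; apply: fuel_eq. Qed.

Lemma zb_cons a b : (a < b)%N ->
  zeta_bounds a b = (a, zeta_split a b) :: zeta_bounds (zeta_split a b) b.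
Proof.
move=> lt; rewrite {1}/zeta_bounds.
have -> : (b - a = (b - a).-1.+1)%N by lia.
by rewrite /= lt fuel_ok //; have := split_gt a b; lia.
Qed.

Lemma zb_nonempty a b : exists xy l, zeta_bounds a b = xy :: l.
Proof.
rewrite /zeta_bounds; case: (b - a)%N => [|n] /=; first by eauto.
by case: ifP; eauto.
Qed.

Lemma E_zeta_cons a b H : (a < b)%N ->
  E (zeta a b) H = E (rand_bs a (zeta_split a b))
     (fun s => E (zeta (zeta_split a b) b) (fun t => H (s :: t))).
Proof. by move=> lt; rewrite /zeta zb_cons // E_list_cons. Qed.

Lemma E_zeta_ext a b F F' : (forall s t, F (s :: t) = F' (s :: t)) ->
  E (zeta a b) F = E (zeta a b) F'.
Proof. by move=> h; rewrite /zeta; case: (zb_nonempty a b) => xy [l ->]; apply: E_list_ext. Qed.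

Lemma flog2 : flog 2 = 1%N.
Proof. exact: trunc_lognn. Qed.

Lemma zb_base b : zeta_bounds b b.+1 = [:: (b, b.+1); (b.+1, b.+2)].
Proof.
rewrite /zeta_bounds subSnn /= ltnSn /zeta_split.
have -> : (b.+2 - b = 2)%N by lia.
by rewrite flog2 addn1.
Qed.

Lemma merge_facts a b : (a < b)%N -> flog (b.+2 - a) != flog (b.+1 - a) ->
  exists m, [/\ (0 < m)%N, zeta_split a b = (a + m)%N,
     zeta_split (a + m) b = (a + m + m)%N, zeta_split a b.+1 = (a + m + m)%N
     & (a + m < b)%N /\ (a + m + m <= b)%N].
Proof.
move=> lt hne; rewrite /zeta_split /flog in hne *.
set N := (b.+1 - a)%N in hne *.
have eN2 : (b.+2 - a = N.+1)%N by rewrite /N; lia.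
rewrite eN2 in hne *.
have hP := @trunc_logP 2 N isT (ltac:(rewrite /N; lia)).
have hL := @trunc_log_ltn 2 N isT.
have hmono := @leq_trunc_log 2 N N.+1 (leqnSn N).
have hgt : (trunc_log 2 N < trunc_log 2 N.+1)%N by rewrite ltn_neqAle eq_sym hne hmono.
have hP1 := @trunc_logP 2 N.+1 isT isT.
have hpow : (2 ^ (trunc_log 2 N).+1 <= 2 ^ trunc_log 2 N.+1)%N by rewrite leq_exp2l.
have : (0 < trunc_log 2 N)%N by rewrite trunc_log_gt0 /= /N; lia.
move: hne hP hL hgt hpow; set k := trunc_log 2 N => hne hP hL hgt hpow.
case: k hP hL hgt hpow hne => [//|j] hP hL hgt hpow hne _.
set m := (2 ^ j)%N.
have m0 : (0 < m)%N by rewrite expn_gt0.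
have e1 : (2 ^ j.+1 = 2 * m)%N by rewrite expnS.
have e2 : (2 ^ j.+2 = 4 * m)%N by rewrite !expnS mulnA.
rewrite e1 in hP; rewrite e2 in hL hpow.
have eN : (N.+1 = 4 * m)%N by lia.
exists m; split => //.
- have -> : (b.+1 - (a + m) = 3 * m - 1)%N by rewrite /N in eN; lia.
  rewrite (@trunc_log_eq 2 j.+1) //= e1 e2; apply/andP; split; lia.
- by rewrite eN -e2 trunc_expnK //= e1; lia.
- rewrite /N in eN; lia.
Qed.

Lemma incr_keep b s1 s2 r : flog (b.+2 - bs_x s1) == flog (b.+1 - bs_x s1) ->
  incr b (s1 :: s2 :: r) = dbind (incr b (s2 :: r)) (fun t => dret (s1 :: t)).
Proof. by move=> h; rewrite [LHS]/= h. Qed.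

Lemma incr_merge b s1 s2 r : flog (b.+2 - bs_x s1) != flog (b.+1 - bs_x s1) ->
  incr b (s1 :: s2 :: r) = dbind coin (fun cR => dbind coin (fun cQ =>
          let m := (bs_x s1, bs_y s2,
                    (if cR then bs_R s1 else bs_R s2),
                    (if cQ then bs_Q s1 else bs_Q s2)) in
          dbind (incr b r) (fun t => dret (m :: t)))).
Proof. by move=> h; rewrite [LHS]/= (negbTE h). Qed.

Lemma base b G : E (zeta b b) (fun l => E (incr b l) G) = E (zeta b b.+1) G.
Proof.
rewrite /zeta zb_base.
have -> : zeta_bounds b b = [:: (b, b.+1)] by rewrite /zeta_bounds subnn.
rewrite !E_list_cons; apply: E_ext => s.
rewrite E_list_nil E_list_cons [incr _ _]/= E_bind; apply: E_ext => s'; by rewrite E_ret E_list_nil.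
Qed.

Lemma main n : forall a b, (b - a <= n)%N -> (a <= b)%N -> forall G,
  E (zeta a b) (fun l => E (incr b l) G) = E (zeta a b.+1) G.
Proof.
elim: n => [|n IH] a b hn hab G.
  have eab : a = b by lia.
  by rewrite eab; apply: base.
case: (ltnP a b) => hlt; last first.
  have eab : a = b by lia.
  by rewrite eab; apply: base.
rewrite [LHS]E_zeta_cons //.
case hf: (flog (b.+2 - a) == flog (b.+1 - a)).
-
  have hs : zeta_split a b.+1 = zeta_split a b.
    by rewrite /zeta_split (eqP hf).
  rewrite [RHS]E_zeta_cons ?hs; last by lia.
  apply: E_rand_ext => r q.
  rewrite (@E_zeta_ext _ _ _ (fun t => E (incr b t) (fun t' => G ((a, zeta_split a b, r, q) :: t')))).
    have := split_gt a b; have := split_le hlt => h1 h2.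
    apply: IH; lia.
  by move=> s t; rewrite incr_keep // E_bind; apply: E_ext => t'; rewrite E_ret.
-
  have [m [m0 e1 e2 e3 [h4 h5]]] := merge_facts hlt (negbT hf).
  rewrite [RHS]E_zeta_cons ?e3; last by lia.
  rewrite e1 (@E_rand_ext _ _ _ (fun s1 => E (rand_bs (a + m) (a + m + m)) (fun s2 =>
    E coin (fun cR => E coin (fun cQ =>
     (fun r q => E (zeta (a + m + m) b.+1) (fun t => G ((a, (a + m + m)%N, r, q) :: t)))
      (if cR then bs_R s1 else bs_R s2) (if cQ then bs_Q s1 else bs_Q s2))))));
    last first.
    move=> r q; rewrite (@E_zeta_cons (a + m) b _ h4) e2.
    apply: E_rand_ext => r2 q2.
    rewrite (@E_zeta_ext _ _ _ (fun rest2 => E coin (fun cR => E coin (fun cQ =>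
       E (incr b rest2) (fun t => G ((a, (a + m + m)%N, (if cR then r else r2),
                                      (if cQ then q else q2)) :: t)))))); last first.
      move=> s t; rewrite incr_merge /=; last by rewrite (negbT hf).
      rewrite E_bind; apply: E_ext => cR; rewrite E_bind; apply: E_ext => cQ.
      by rewrite E_bind; apply: E_ext => t'; rewrite E_ret.
    rewrite E_swap; apply: E_ext => cR; rewrite E_swap; apply: E_ext => cQ.
    apply: IH; lia.
  rewrite [RHS]E_rand_bs; exact: (@E_merge2 a m (fun r q => E (zeta (a + m + m) b.+1) (fun t => G ((a, (a + m + m)%N, r, q) :: t))) m0).
Qed.

Lemma prob_E (T : eqType) (d : dist T) v : prob d v = E d (fun x => (x == v)%:R).
Proof.
rewrite /prob /E big_mkcond; apply: eq_bigr => p _.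
by case: eqP => _; rewrite ?mulr1 ?mulr0.
Qed.

Theorem lemma4p1 (a b : nat) :
  (a <= b)%N ->
  forall v : seq BS,
    prob (dbind (zeta a b) (incr b)) v = prob (zeta a b.+1) v.
Proof.
move=> hab v; rewrite !prob_E E_bind.
exact: (@main (b - a) a b (leqnn _) hab).
Qed.
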